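(* Let $G=(V,E)$ be a graph with $n$ vertices and integer edge weights $w\colon E\to\{1,\dots,W\}$, let $\beta\in(0,1]$, and run the clustering defined in the context with $p=\beta/4$ and $r=\left\lceil \frac{1}{p}\ln\!\left(\frac{n^2}{p}\right)+\frac{1}{4p}\right\rceil$. Then for every edge $(u,v)\in E$, the probability that $u$ and $v$ belong to different clusters (i.e., $c_u\neq c_v$) is at most $4p\cdot w(u,v)$.
   Context: Setting (the clustering): $G=(V,E)$ has integer edge weights, $d_G$ is the weighted shortest-path distance, and each vertex has a distinct identifier $\mathrm{ID}(v)$. For $p\in(0,1)$, $r\in\mathbb{N}$, let $\mathrm{GeomCap}(p,r)$ be the distribution on $\{0,\dots,r\}$ with $\Pr[=i]=p(1-p)^i$ for $0\leq i\leq r-1$ and $\Pr[=r]=(1-p)^r$. Each vertex $v$ independently samples $\delta_v\sim\mathrm{GeomCap}(p,r)$. For $u,x\in V$ define $d^{(u)}(s,x):=r-\delta_u+d_G(u,x)$ and $d_{G'}(s,x):=\min_{u\in V} d^{(u)}(s,x)$. The cluster center $c_x$ of $x$ is the vertex $u$ with smallest $\mathrm{ID}$ among those with $d^{(u)}(s,x)=d_{G'}(s,x)$; the cluster of a center $c$ is $\{x\in V: c_x=c\}$. *)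

(* Defs.v *)
From HB Require Import structures.
From mathcomp Require Import all_boot all_order all_algebra.
From mathcomp Require Import boolp reals exp.
Set Implicit Arguments. Unset Strict Implicit. Unset Printing Implicit Defensive.
Import Order.TTheory GRing.Theory Num.Theory.

Section Clustering.
Variables (V : finType) (E : rel V) (w : V -> V -> nat).

Fixpoint walkw (x : V) (p : seq V) : nat :=
  if p is y :: p' then w x y + walkw y p' else 0.

Definition walk_weight_pred (u x : V) : pred nat :=
  fun n => `[< exists p : seq V, [/\ path E u p, last u p = x & walkw u p = n] >].

(* weighted shortest-path distance d_G(u,x); None = +infinity (no walk) *)
Definition dG (u x : V) : option nat :=
  match pselect (exists n, walk_weight_pred u x n) with
  | left H => Some (ex_minn H)
  | right _ => None
  end.

Variable r : nat.
Variable delta : {ffun V -> 'I_r.+1}.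

Definition dU (u x : V) : option nat :=
  omap (fun d => r - delta u + d) (dG u x).

Definition omin (a b : option nat) : option nat :=
  match a, b with
  | Some x, Some y => Some (minn x y)
  | Some x, None => Some x
  | None, b => b
  end.

Definition dGp (x : V) : option nat := \big[omin/None]_(u : V) dU u x.

Variable ID : V -> nat.

Definition center (x : V) : V :=
  [arg min_(u < x | dU u x == dGp x) ID u].

End Clustering.

Definition geomcap (R : realType) (p : R) (r : nat) (i : 'I_r.+1) : R :=
  (if (i < r)%N then p * (1 - p) ^+ i else (1 - p) ^+ r)%R.

Definition prob_delta (R : realType) (V : finType) (p : R) (r : nat)
  (delta : {ffun V -> 'I_r.+1}) : R :=
  (\prod_(v : V) geomcap p (delta v))%R.

Definition rpar (R : realType) (p : R) (n : nat) : nat :=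
  `|Num.ceil (p^-1 * ln ((n ^ 2)%:R / p) + (4 * p)^-1)%R|%N.

(* Main.v *)
Require Import Defs.
From HB Require Import structures.
From mathcomp Require Import all_boot all_order all_algebra.
From mathcomp Require Import boolp reals sequences exp.
From mathcomp Require Import zify.
Import Order.TTheory GRing.Theory Num.Theory.
Set Implicit Arguments. Unset Strict Implicit. Unset Printing Implicit Defensive.

Section Graph.
Variables (V : finType) (E : rel V) (w : V -> V -> nat).

Lemma walkw_rcons x p y : walkw w x (rcons p y) = walkw w x p + w (last x p) y.
Proof. elim: p x => [|z p IH] x /=; first by rewrite addn0. by rewrite IH addnA. Qed.

Lemma dG_self a : dG E w a a = Some 0.
Proof.
rewrite /dG; case: pselect => [H|H].
  case: ex_minnP => m _ H'; congr Some; apply/eqP; rewrite -leqn0; apply: H'.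
  by apply/asboolP; exists [::].
by exfalso; apply: H; exists 0; apply/asboolP; exists [::].
Qed.

Lemma dG_walk a b d : dG E w a b = Some d ->
  exists p, [/\ path E a p, last a p = b & walkw w a p = d].
Proof.
rewrite /dG; case: pselect => [H|//] [<-].
by case: ex_minnP => m /asboolP.
Qed.

Lemma dG_min a b p : path E a p -> last a p = b ->
  exists2 d, dG E w a b = Some d & d <= walkw w a p.
Proof.
move=> Hp Hl; rewrite /dG; case: pselect => [H|H].
  exists (ex_minn H) => //; case: ex_minnP => m _; apply.
  by apply/asboolP; exists p.
by exfalso; apply: H; exists (walkw w a p); apply/asboolP; exists p.
Qed.

Lemma dG_step a b c d : dG E w a b = Some d -> E b c ->
  exists2 d', dG E w a c = Some d' & d' <= d + w b c.
Proof.
move=> /dG_walk [p [Hp Hl Hw]] Ebc.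
have Hp' : path E a (rcons p c) by rewrite rcons_path Hp Hl.
have [d' -> Hd'] := @dG_min a c (rcons p c) Hp' (last_rcons _ _ _).
by exists d' => //; rewrite walkw_rcons Hl Hw in Hd'.
Qed.
End Graph.

Lemma omin_bigP (I : eqType) (s : seq I) (f : I -> option nat) :
  (forall i d, i \in s -> f i = Some d ->
     exists2 m, \big[omin/None]_(i <- s) f i = Some m & m <= d) /\
  (forall m, \big[omin/None]_(i <- s) f i = Some m -> exists i, f i = Some m).
Proof.
elim: s => [|x s [IH1 IH2]]; first by split => //; rewrite big_nil.
rewrite big_cons; split.
  move=> i d; rewrite inE => /orP[/eqP->|iS] fi.
    rewrite fi; case: (\big[omin/None]_(j <- s) f j) => [b|] /=.
      by exists (minn d b) => //; apply: geq_minl.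
    by exists d.
  have [m -> le] := IH1 i d iS fi.
  case: (f x) => [a|] /=; last by exists m.
  by exists (minn a m) => //; rewrite geq_min le orbT.
move=> m; case E1: (f x) => [a|]; case E2: (\big[omin/None]_(j <- s) f j) => [b|] //=.
- case=> <-; case: (leqP a b) => ab; first by exists x.
  by apply: IH2.
- by case=> <-; exists x.
- by move=> H; apply: IH2; rewrite E2.
Qed.
Section Center.
Variables (V : finType) (E : rel V) (w : V -> V -> nat) (r : nat)
  (delta : {ffun V -> 'I_r.+1}) (ID : V -> nat).

Local Notation dU := (dU E w delta).
Local Notation dGp := (dGp E w delta).
Local Notation center := (center E w delta ID).

Lemma dU_self x : dU x x = Some (r - delta x).
Proof. by rewrite /dU dG_self /= addn0. Qed.

Lemma dGp_le y x my : dU y x = Some my -> exists2 m, dGp x = Some m & m <= my.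
Proof.
have [H _] := omin_bigP (index_enum V) (fun u => dU u x).
by move=> h; apply: (H y my (mem_index_enum _) h).
Qed.

Lemma dGp_att x m : dGp x = Some m -> exists y, dU y x = Some m.
Proof.
have [_ H] := omin_bigP (index_enum V) (fun u => dU u x).
exact: H.
Qed.

Lemma argmin_any (I : finType) (i0 c : I) (P : pred I) (F : I -> nat) :
  P c -> arg_min i0 P F = arg_min c P F.
Proof.
move=> Pc; have := arg_minnP F Pc; rewrite /arg_min /extremum.
case: pickP => [//|no_i] /= [i Pi mini].
move: (no_i i) => /=; rewrite Pi /= => /negbT; rewrite negb_forall => /existsP [j].
by rewrite negb_imply => /andP [Pj]; rewrite mini.
Qed.

Definition wins z x := exists m, dU z x = Some m /\
  forall y my, dU y x = Some my -> m <= my /\ (my = m -> ID z <= ID y).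

Lemma center_spec x : dU (center x) x = dGp x /\
  forall j, dU j x = dGp x -> ID (center x) <= ID j.
Proof.
have [m Hm _] := dGp_le (dU_self x).
have [y Hy] := dGp_att Hm.
have Py : dU y x == dGp x by rewrite Hy Hm.
rewrite /Defs.center (@argmin_any _ x y (fun u => dU u x == dGp x) ID Py).
case: arg_minnP => // c /eqP Pc minc; split => // j Hj.
by apply: minc; apply/eqP.
Qed.

Lemma center_wins x : wins (center x) x.
Proof.
have [H1 H2] := center_spec x.
have [m Hm _] := dGp_le (dU_self x).
exists m; split; first by rewrite H1.
move=> y my Hy; have [m' Hm' le] := dGp_le Hy.
rewrite Hm in Hm'; case: Hm' => Em; subst m'; split => // E1.
by apply: H2; rewrite Hy Hm E1.
Qed.

Lemma wins_center z x : injective ID -> wins z x -> center x = z.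
Proof.
move=> inj [m [Hz Hmin]].
have [m' Hm' le] := dGp_le Hz.
have [y Hy] := dGp_att Hm'.
have [le2 _] := Hmin y m' Hy.
have em : m' = m by apply/eqP; rewrite eqn_leq le le2.
have [H1 H2] := center_spec x.
have l1 : ID (center x) <= ID z by apply: H2; rewrite Hz Hm' em.
move: H1; rewrite Hm' em => Hc.
have [_ l2] := Hmin _ _ Hc.
by apply: inj; apply/eqP; rewrite eqn_leq l1 l2.
Qed.
End Center.
Definition upd (V : finType) (T : Type) (f : {ffun V -> T}) (z : V) (i : T) :
  {ffun V -> T} := [ffun y => if y == z then i else f y].

Lemma upd_z (V : finType) T (f : {ffun V -> T}) z i : upd f z i z = i.
Proof. by rewrite ffunE eqxx. Qed.
Lemma upd_ne (V : finType) T (f : {ffun V -> T}) z i y : y != z -> upd f z i y = f y.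
Proof. by rewrite ffunE => /negbTE ->. Qed.

Section PerDelta.
Variables (V : finType) (E : rel V) (w : V -> V -> nat) (r : nat) (ID : V -> nat).
Hypothesis injID : injective ID.

Lemma dU_upd_ne (d0 : {ffun V -> 'I_r.+1}) z i j y x : y != z ->
  dU E w (upd d0 z i) y x = dU E w (upd d0 z j) y x.
Proof. by move=> yz; rewrite /dU !upd_ne. Qed.

Lemma up_closed (d0 : {ffun V -> 'I_r.+1}) z (i j : 'I_r.+1) x :
  center E w (upd d0 z i) ID x = z -> i <= j ->
  center E w (upd d0 z j) ID x = z.
Proof.
move=> Hc ij; apply: wins_center => //.
have [m [Hm Hmin]] := center_wins E w (upd d0 z i) ID x.
rewrite Hc in Hm Hmin.
move: Hm; rewrite /dU upd_z; case Hd: (dG E w z x) => [d|] //= [Em].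
exists (r - j + d); split; first by rewrite /dU upd_z Hd.
move=> y my; case: (eqVneq y z) => [->|yz].
  by rewrite /dU upd_z Hd => -[<-].
rewrite -(dU_upd_ne d0 i j x yz) => Hy.
have [l1 l2] := Hmin y my Hy.
have lm : r - j + d <= m by rewrite -Em; have := ltn_ord i; have := ltn_ord j; lia.
split; first exact: leq_trans lm l1.
move=> e; apply: l2; apply/eqP; rewrite eqn_leq l1 /=; lia.
Qed.

Hypothesis Esym : symmetric E.
Hypothesis wsym : forall x y, w x y = w y x.

Lemma bad_gap (d0 : {ffun V -> 'I_r.+1}) z (i j : 'I_r.+1) u v : E u v ->
  center E w (upd d0 z i) ID u = z -> center E w (upd d0 z i) ID v != z ->
  center E w (upd d0 z j) ID u = z -> i <= j + 2 * w u v.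
Proof.
move=> Euv Hci Hcv Hcj.
set y := center E w (upd d0 z i) ID v in Hcv.
have [mv [Hmv Hminv]] := center_wins E w (upd d0 z i) ID v.
rewrite -/y in Hmv Hminv.
have [mi [Hmi _]] := center_wins E w (upd d0 z i) ID u.
rewrite Hci in Hmi.
move: Hmi; rewrite /dU upd_z; case Hd: (dG E w z u) => [d|] //= [Emi].
have [d1 Hd1 le1] := dG_step Hd Euv.
have Hzv : dU E w (upd d0 z i) z v = Some (r - i + d1) by rewrite /dU Hd1 upd_z.
have [le2 _] := Hminv _ _ Hzv.
move: Hmv; rewrite /dU; case He: (dG E w y v) => [e|] //= [Emv].
have Evu : E v u by rewrite Esym.
have [e1 He1 le3] := dG_step He Evu.
have [mj [Hmj Hminj]] := center_wins E w (upd d0 z j) ID u.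
rewrite Hcj /dU upd_z Hd /= in Hmj; case: Hmj => Emj.
have Hyu : dU E w (upd d0 z j) y u = Some (r - d0 y + e1).
  by rewrite /dU He1 /= upd_ne.
have [le4 _] := Hminj _ _ Hyu.
move: Emv; rewrite upd_ne // => Emv.
rewrite wsym in le3.
have := ltn_ord i; have := ltn_ord j; have := ltn_ord (d0 y).
lia.
Qed.
End PerDelta.
From mathcomp Require Import ring lra.
Local Open Scope ring_scope.

Lemma sum_sub (R : realType) (I : finType) (P Q : pred I) (F : I -> R) :
  (forall i, P i -> Q i) -> (forall i, Q i -> 0 <= F i) ->
  \sum_(i | P i) F i <= \sum_(i | Q i) F i.
Proof.
move=> PQ F0; rewrite [X in X <= _]big_mkcond [X in _ <= X]big_mkcond.
apply: ler_sum => i _; case Pi: (P i); first by rewrite (PQ _ Pi).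
by case Qi: (Q i) => //; apply: F0.
Qed.

Section Geom.
Variables (R : realType) (p : R) (r : nat).
Hypotheses (hp0 : 0 <= p) (hp1 : p <= 1).

Local Notation g := (@geomcap R p r).

Lemma g_ge0 i : 0 <= g i.
Proof.
rewrite /geomcap; case: ifP => _; last by apply: exprn_ge0; rewrite subr_ge0.
by apply: mulr_ge0 => //; apply: exprn_ge0; rewrite subr_ge0.
Qed.

Lemma g_max : g ord_max = (1 - p) ^+ r.
Proof. by rewrite /geomcap /= ltnn. Qed.

Lemma tail_sum a : (a <= r)%N -> \sum_(i : 'I_r.+1 | (a <= i)%N) g i = (1 - p) ^+ a.
Proof.
move=> ar; have -> : a = (r - (r - a))%N by lia.
elim: (r - a)%N (leq_subr a r) => [|k IH] kr.
  rewrite subn0 (big_pred1 ord_max) ?g_max // => i.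
  by apply/idP/eqP => [h|->//]; apply: val_inj => /=; have := ltn_ord i; lia.
have ak : (r - k.+1 < r.+1)%N by lia.
rewrite (bigD1 (inord (r - k.+1))) /=; last by rewrite inordK.
rewrite (eq_bigl (fun i : 'I_r.+1 => (r - k <= i)%N)); last first.
  move=> i; apply/andP/idP => [[h1 h2]|h].
    have : (i : nat) != (r - k.+1)%N.
      by apply: contra h2 => /eqP e; apply/eqP; apply: val_inj; rewrite /= inordK.
    lia.
  split; first lia.
  by apply/eqP => /(congr1 val); rewrite /= inordK //; lia.
rewrite IH; last lia.
rewrite /geomcap inordK // ifT; last lia.
have -> : (r - k = (r - k.+1).+1)%N by lia.
rewrite exprS; ring.
Qed.

Lemma g_sum1 : \sum_(i : 'I_r.+1) g i = 1.
Proof.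
by rewrite -(expr0 (1 - p)) -tail_sum //; apply: eq_bigl.
Qed.

Lemma gap_bound (B S : pred 'I_r.+1) (k : nat) :
  (forall i, B i -> S i) -> (forall i j : 'I_r.+1, S i -> (i <= j)%N -> S j) ->
  (forall i j : 'I_r.+1, B i -> S j -> (i <= j + k)%N) ->
  \sum_(i | B i) g i <= (k.+1)%:R * p * \sum_(i | S i) g i + (1 - p) ^+ r.
Proof.
move=> BS Sup Bgap.
case: (pickP B) => [i0 Bi0|B0]; last first.
  rewrite big_pred0 //; apply: addr_ge0; last by apply: exprn_ge0; rewrite subr_ge0.
  apply: mulr_ge0; first by apply: mulr_ge0 => //; apply: ler0n.
  by apply: sumr_ge0 => i _; apply: g_ge0.
have S0 := BS _ Bi0.
case: (@arg_minnP _ _ S (fun j : 'I_r.+1 => (j : nat)) S0) => am Sam minam.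
have Seq : forall j, S j = (am <= j)%N.
  move=> j; apply/idP/idP => [/minam //|]; exact: Sup.
rewrite (eq_bigl _ _ Seq) tail_sum; last by have := ltn_ord am; lia.
rewrite (bigID (fun i : 'I_r.+1 => (i < r)%N)) /=.
apply: lerD; last first.
  rewrite -g_max; apply: le_trans (sum_sub (Q := fun i : 'I_r.+1 => i == ord_max) _ _) _.
  - move=> i /andP[_ h]; apply/eqP; apply: val_inj => /=; have := ltn_ord i; lia.
  - by move=> i _; apply: g_ge0.
  by rewrite big_pred1_eq.
apply: le_trans (_ : \sum_(i | B i && (i < r)%N) (p * (1 - p) ^+ am) <= _).
  apply: ler_sum => i /andP[Bi ir]; rewrite /geomcap ir.
  apply: ler_wpM2l => //; apply: ler_wiXn2l.
  - by rewrite subr_ge0.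
  - by rewrite lerBlDr lerDl.
  by rewrite -Seq; apply: BS.
rewrite (eq_bigl (fun i => i \in [pred i : 'I_r.+1 | B i && (i < r)%N])) // sumr_const -[X in X <= _]mulr_natl mulrA; apply: ler_wpM2r; first by apply: exprn_ge0; rewrite subr_ge0.
apply: ler_wpM2r => //; rewrite ler_nat.
pose s := [seq (inord (am + j) : 'I_r.+1) | j <- iota 0 k.+1].
apply: leq_trans (_ : (#|s| <= _)%N); last by apply: leq_trans (card_size _) _; rewrite size_map size_iota.
apply: subset_leq_card; apply/subsetP => i; rewrite inE => /andP [Bi ir].
have h1 : (am <= i)%N by rewrite -Seq; apply: BS.
have h2 : (i <= am + k)%N by apply: Bgap.
apply/mapP; exists (i - am)%N; first by rewrite mem_iota; lia.
apply: val_inj; rewrite /= inordK; lia.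
Qed.
End Geom.
Lemma cap_bound (R : realType) (p : R) (n : nat) :
  0 < p -> p <= 1 -> (0 < n)%N -> n%:R * (1 - p) ^+ (rpar p n) <= p.
Proof.
move=> p0 p1 n0.
set L := ln ((n ^ 2)%:R / p).
have n2 : 1 <= ((n ^ 2)%:R : R) by rewrite ler1n expn_gt0 n0.
have np : 1 <= (n ^ 2)%:R / p.
  rewrite ler_pdivlMr // mul1r; exact: le_trans p1 n2.
have L0 : 0 <= L by apply: ln_ge0.
set X := p^-1 * L + (4 * p)^-1.
have X0 : 0 <= X by apply: addr_ge0; [apply: mulr_ge0 => //; rewrite invr_ge0 ltW | rewrite invr_ge0 mulr_ge0 // ltW].
have rX : X <= (rpar p n)%:R.
  rewrite /rpar -/L -/X natr_absz ger0_norm; first exact: ceil_ge.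
  by rewrite ceil_ge0; apply: lt_le_trans X0; rewrite ltrN10.
have rL : L <= p * (rpar p n)%:R.
  rewrite -ler_pdivrMl // mulrC; apply: le_trans rX; rewrite /X mulrC lerDl invr_ge0 mulr_ge0 // ltW //.
have h1 : (1 - p) ^+ rpar p n <= expR (- p) ^+ rpar p n.
  apply: lerXn2r; rewrite ?nnegrE ?subr_ge0 ?expR_ge0 //.
  by have := expR_ge1Dx (- p).
have h2 : expR (- p) ^+ rpar p n <= expR (- L).
  by rewrite -expRM_natl ler_expR mulrN lerN2 mulrC.
have h3 : expR (- L) = p / (n ^ 2)%:R.
  rewrite expRN /L lnK; first by rewrite invf_div.
  by rewrite posrE; apply: lt_le_trans np.
have nn : (0 : R) < n%:R by rewrite ltr0n.
apply: le_trans (_ : n%:R * (p / (n ^ 2)%:R) <= _).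
  by rewrite ler_wpM2l ?ler0n // -h3; apply: le_trans h2.
rewrite natrX expr2 invfM.
have nz : (n%:R : R) != 0 by rewrite gt_eqF.
have -> : n%:R * (p * (n%:R^-1 / n%:R)) = p / n%:R :> R by field.
by rewrite ler_pdivrMr // -{1}(mulr1 p) ler_pM2l // ler1n.
Qed.
Lemma decomp (R : realType) (V T : finType) (z : V) (t0 : T) (F : {ffun V -> T} -> R) :
  \sum_(d : {ffun V -> T}) F d =
  \sum_(d0 : {ffun V -> T} | d0 z == t0) \sum_(i : T) F (upd d0 z i).
Proof.
rewrite (partition_big (fun d : {ffun V -> T} => upd d z t0) (fun d0 => d0 z == t0)) /=;
  last by move=> d _; rewrite upd_z.
apply: eq_bigr => d0 /eqP H0.
rewrite (partition_big (fun d : {ffun V -> T} => d z) xpredT) //=.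
apply: eq_bigr => i _.
apply: big_pred1 => d /=.
apply/andP/eqP => [[/eqP H1 /eqP H2]|->].
  apply/ffunP => y; rewrite ffunE; case: eqP => [->//|/eqP yz].
  by rewrite -H1 upd_ne.
split; apply/eqP; last by rewrite upd_z.
apply/ffunP => y; rewrite !ffunE; case: eqP => [->//|//].
Qed.

Section Prob.
Variables (R : realType) (p : R) (r : nat) (V : finType).
Hypotheses (hp0 : 0 <= p) (hp1 : p <= 1).

Lemma prob_upd (d0 : {ffun V -> 'I_r.+1}) z i :
  prob_delta p (upd d0 z i) = geomcap p i * \prod_(y | y != z) geomcap p (d0 y).
Proof.
rewrite /prob_delta (bigD1 z) //= upd_z; congr (_ * _).
by apply: eq_bigr => y yz; rewrite upd_ne.
Qed.

Lemma decompP z (Q : pred {ffun V -> 'I_r.+1}) :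
  \sum_(d | Q d) prob_delta p d =
  \sum_(d0 : {ffun V -> 'I_r.+1} | d0 z == ord0)
     (\prod_(y | y != z) geomcap p (d0 y)) * \sum_(i | Q (upd d0 z i)) geomcap p i.
Proof.
rewrite big_mkcond (decomp z ord0) /=; apply: eq_big => // d0 _.
rewrite big_distrr /= [RHS]big_mkcond /=; apply: eq_bigr => i _.
by case: (Q _) => //; rewrite ?mulr0 // prob_upd mulrC.
Qed.

Lemma total : \sum_(d : {ffun V -> 'I_r.+1}) prob_delta p d = 1.
Proof.
rewrite /prob_delta -(bigA_distr_bigA (fun (_ : V) (j : 'I_r.+1) => geomcap p j)) /=.
by apply: big1 => v _; apply: g_sum1.
Qed.

Lemma Pprime_ge0 (d0 : {ffun V -> 'I_r.+1}) z :
  0 <= \prod_(y | y != z) geomcap p (d0 y).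
Proof. by apply: prodr_ge0 => y _; apply: g_ge0. Qed.

Lemma total' z : \sum_(d0 : {ffun V -> 'I_r.+1} | d0 z == ord0)
     (\prod_(y | y != z) geomcap p (d0 y)) = 1.
Proof.
transitivity (\sum_(d : {ffun V -> 'I_r.+1}) prob_delta p d); last exact: total.
rewrite (decompP z xpredT); apply: eq_bigr => d0 _.
by rewrite g_sum1 // mulr1.
Qed.
End Prob.
Section Main.
Variables (R : realType) (V : finType) (E : rel V) (w : V -> V -> nat) (ID : V -> nat)
  (p : R) (r : nat) (u v : V).
Hypotheses (hp0 : 0 <= p) (hp1 : p <= 1) (Esym : symmetric E)
  (wsym : forall x y, w x y = w y x) (injID : injective ID) (Euv : E u v).

Lemma per_z z :
  \sum_(d : {ffun V -> 'I_r.+1} | (center E w d ID u == z) && (center E w d ID v != z))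
     prob_delta p d <=
  ((2 * w u v).+1)%:R * p *
    \sum_(d : {ffun V -> 'I_r.+1} | center E w d ID u == z) prob_delta p d
  + (1 - p) ^+ r.
Proof.
rewrite !(decompP _ z).
rewrite [X in _ <= _ + X](_ : _ = (1 - p) ^+ r *
   \sum_(d0 : {ffun V -> 'I_r.+1} | d0 z == ord0) \prod_(y | y != z) geomcap p (d0 y));
  last by rewrite (@total' R p r V hp0 hp1 z) mulr1.
rewrite mulr_sumr big_distrr -big_split /=.
apply: ler_sum => d0 _.
set P' := \prod_(y | y != z) geomcap p (d0 y).
have P0 : 0 <= P' by apply: Pprime_ge0.
have H := @gap_bound R p r hp0 hp1
  (fun i => (center E w (upd d0 z i) ID u == z) && (center E w (upd d0 z i) ID v != z))
  (fun i => center E w (upd d0 z i) ID u == z) (2 * w u v)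
  (fun i => fun h => proj1 (andP h))
  (fun i j Hi ij => introT eqP (up_closed injID (elimT eqP Hi) ij))
  (fun i j Hi Hj => bad_gap Esym wsym Euv (elimT eqP (proj1 (andP Hi))) (proj2 (andP Hi)) (elimT eqP Hj)).
apply: le_trans (ler_wpM2l P0 H) _.
rewrite le_eqVlt; apply/orP; left; apply/eqP; ring.
Qed.
End Main.
Unset Implicit Arguments.

Theorem lemma12 (R : realType) (V : finType) (E : rel V) (w : V -> V -> nat)
  (W : nat) (ID : V -> nat) (beta : R) :
  symmetric E -> irreflexive E ->
  (forall x y, w x y = w y x) ->
  (forall x y, E x y -> (1 <= w x y <= W)%N) ->
  injective ID ->
  0 < beta <= 1 ->
  let p := beta / 4 in
  let r := rpar p #|V| in
  forall u v, E u v ->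
    \sum_(delta : {ffun V -> 'I_r.+1}
          | center E w delta ID u != center E w delta ID v)
       prob_delta p delta
    <= 4 * p * (w u v)%:R.
Proof.
move=> Esym Eirr wsym wW injID /andP[b0 b1] p r u v Euv.
have p0 : 0 < p by rewrite /p divr_gt0.
have p1 : p <= 1 by rewrite /p ler_pdivrMr //; lra.
have hp0 : 0 <= p by apply: ltW.
have w1 : (1 <= w u v)%N by case/andP: (wW _ _ Euv).
have -> : \sum_(d : {ffun V -> 'I_r.+1} | center E w d ID u != center E w d ID v)
    prob_delta p d =
  \sum_(z : V) \sum_(d : {ffun V -> 'I_r.+1} |
     (center E w d ID u == z) && (center E w d ID v != z)) prob_delta p d.
  under [RHS]eq_bigr => z _ do rewrite big_mkcond.
  rewrite exchange_big /= [LHS]big_mkcond; apply: eq_bigr => d _.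
  rewrite (bigD1 (center E w d ID u)) //= eqxx /= big1 ?addr0.
    by rewrite eq_sym.
  by move=> z zc; rewrite eq_sym (negbTE zc).
apply: le_trans (ler_sum _ (fun z _ => @per_z R V E w ID p r u v hp0 p1 Esym wsym injID Euv z)) _.
rewrite big_split /= -mulr_sumr.
have part : \sum_(z : V) \sum_(d : {ffun V -> 'I_r.+1} | center E w d ID u == z)
    prob_delta p d = 1.
  transitivity (\sum_(d : {ffun V -> 'I_r.+1}) prob_delta p d); last exact: total.
  by rewrite (partition_big (fun d => center E w d ID u) xpredT).
rewrite part mulr1.
rewrite (_ : \sum_(z : V) (1 - p) ^+ r = #|V|%:R * (1 - p) ^+ r); last by rewrite sumr_const mulr_natl.
have n0 : (0 < #|V|)%N by apply/card_gt0P; exists u.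
have cb := cap_bound p0 p1 n0.
have W1 : 1 <= (w u v)%:R :> R by rewrite ler1n.
rewrite -addn1 natrD natrM.
move: cb W1; rewrite -/r; set X := _ * _ ^+ _; set Wr := (w u v)%:R.
move=> cb W1; nra.
Qed.
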